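(* Assume that $\mathbb{E}[\bar{w}_k] = 0$ and $\mathbb{E}[\| \bar{w}_k \|^4] \leq \bar{\sigma}_4$ for all $k\in \mathbb{N}$. Suppose that the feedback gain $K$ and observer gain $L$ are chosen such that $\|\bar{A}_{KL}\| = \bar{\rho}_K <1$. Then the variance of the random variable \begin{align*} G^{KL}(\bar{x}) &= \bar{x}^{\rm{T}} \bar{P} \bar{x} + 2 \sum_{k = 0 }^{\infty} \gamma^{k+1} \bar{w}_k^{\rm{T}} \bar{P} \bar{A}_{KL}^{k+1}\bar{x} + \sum_{k = 0 }^{\infty} \gamma^{k+1} \bar{w}_k^{\rm{T}} \bar{P} \bar{w}_k \\ &\quad + 2 \sum_{k = 1 }^{\infty} \gamma^{k+1} \bar{w}_k^{\rm{T}} \bar{P} \sum_{\tau=0}^{k-1} \bar{A}_{KL}^{k-\tau}\bar{w}_{\tau} \end{align*} is bounded.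
   Context: Partially observable system $x_{t+1}=A x_t + B u_t + v_t$, $y_t = C x_t + s_t$ with estimator $\hat{x}_{t+1} = A \hat{x}_t + B u_t + L(y_t - C \hat{x}_t)$ and controller $u_t = K\hat{x}_t$. With $\tilde{x}_t = x_t-\hat{x}_t$ and $\bar{x}_t = [x_t^{\rm{T}}, \tilde{x}_t^{\rm{T}}]^{\rm{T}}$, the augmented dynamics are $\bar{x}_{t+1} = \bar{A}_{KL}\bar{x}_t + \bar{v}_t$, $\bar{A}_{KL} = \begin{bmatrix} A+BK & -BK \\ 0 & A-LC\end{bmatrix}$, $\bar{v}_t = \begin{bmatrix} I & 0 \\ I & -L\end{bmatrix}\begin{bmatrix} v_t \\ s_t\end{bmatrix}$, i.i.d. with distribution $\bar{\mathcal{D}}$. $Q,R>0$, $\gamma\in(0,1)$, $\bar{Q}_K=\begin{bmatrix} Q + K^{\rm{T}} R K & -K^{\rm{T}} R K \\ -K^{\rm{T}} R K & K^{\rm{T}} R K \end{bmatrix}$, and $\bar{P}$ solves $\bar{P} = \bar{Q}_K + \gamma \bar{A}_{KL}^{\rm{T}} \bar{P} \bar{A}_{KL}$. The $\bar{w}_k\sim\bar{\mathcal{D}}$ are mutually independent; $\bar{x}$ is the augmented initial state. This random variable is the fixed point of the distributional Bellman equation for the return $\sum_t \gamma^t \bar{x}_t^{\rm{T}}\bar{Q}_K\bar{x}_t$. $\|\cdot\|$ is the spectral norm. *)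

(* Defs.v *)
From HB Require Import structures.
From mathcomp Require Import all_boot all_order all_algebra.
From mathcomp Require Import all_classical all_reals all_analysis.
Set Implicit Arguments. Unset Strict Implicit. Unset Printing Implicit Defensive.
Import Order.TTheory GRing.Theory Num.Theory.
Local Open Scope classical_set_scope.
Local Open Scope ring_scope.

Definition enorm (R : realType) (N : nat) (v : 'cV[R]_N) : R :=
  Num.sqrt (\sum_(i < N) v i 0 ^+ 2).

Definition spec_norm (R : realType) (M N : nat) (X : 'M[R]_(M, N)) : R :=
  sup [set enorm (X *m v) | v in [set v : 'cV[R]_N | enorm v <= 1]].

Definition posdef (R : realType) (N : nat) (X : 'M[R]_N) : Prop :=
  X^T = X /\ forall v : 'cV[R]_N, v != 0 -> 0 < (v^T *m X *m v) 0 0.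

Definition Abar (R : realType) (n m p : nat) (A : 'M[R]_n) (B : 'M[R]_(n, m))
  (C : 'M[R]_(p, n)) (K : 'M[R]_(m, n)) (L : 'M[R]_(n, p)) : 'M[R]_(n + n) :=
  block_mx (A + B *m K) (- (B *m K)) 0 (A - L *m C).

Definition Mbar (R : realType) (n p : nat) (L : 'M[R]_(n, p)) : 'M[R]_(n + n, n + p) :=
  block_mx 1%:M 0 1%:M (- L).

Definition Qbar (R : realType) (n m : nat) (Q : 'M[R]_n) (Rc : 'M[R]_m)
  (K : 'M[R]_(m, n)) : 'M[R]_(n + n) :=
  block_mx (Q + K^T *m Rc *m K) (- (K^T *m Rc *m K))
           (- (K^T *m Rc *m K)) (K^T *m Rc *m K).

Definition qf (R : realType) (N : nat) (P : 'M[R]_N) (u v : 'cV[R]_N) : R :=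
  (u^T *m P *m v) 0 0.

Definition rseries (R : realType) (m : nat) (u : nat -> R) : R :=
  limn (fun N => \sum_(m <= k < N) u k).

(* Mutual independence of a sequence of random vectors: product rule for
   every finite family of distinct indices and every family of measurable
   rectangles (these generate the Borel sigma-algebra of R^N). *)
Definition rect_event (d : measure_display) (T : measurableType d) (R : realType)
  (N : nat) (X : T -> 'cV[R]_N) (A : 'I_N -> set R) : set T :=
  [set w | forall i, A i (X w i 0)].

Definition mutually_independent (d : measure_display) (T : measurableType d)
  (R : realType) (P : probability T R) (N : nat) (w : nat -> T -> 'cV[R]_N) : Prop :=
  forall (J : seq nat) (A : nat -> 'I_N -> set R),
    uniq J -> (forall k i, measurable (A k i)) ->
    P (\bigcap_(k in [set` J]) rect_event (w k) (A k))
    = (\prod_(k <- J) P (rect_event (w k) (A k)))%E.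

Definition identically_distributed (d : measure_display) (T : measurableType d)
  (R : realType) (P : probability T R) (N : nat) (w : nat -> T -> 'cV[R]_N) : Prop :=
  forall (k : nat) (A : 'I_N -> set R), (forall i, measurable (A i)) ->
    P (rect_event (w k) A) = P (rect_event (w 0%N) A).

Definition GKL (d : measure_display) (T : measurableType d) (R : realType)
  (N : nat) (Ab Pb : 'M[R]_N) (gamma : R) (w : nat -> T -> 'cV[R]_N)
  (x : 'cV[R]_N) (om : T) : R :=
  qf Pb x x
  + 2 * rseries 0 (fun k => gamma ^+ k.+1 * qf Pb (w k om) (Ab ^+ k.+1 *m x))
  + rseries 0 (fun k => gamma ^+ k.+1 * qf Pb (w k om) (w k om))
  + 2 * rseries 1 (fun k => gamma ^+ k.+1 *
          qf Pb (w k om) (\sum_(0 <= tau < k) Ab ^+ (k - tau) *m w tau om)).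

(* Main.v *)
Require Import Defs.
From HB Require Import structures.
From mathcomp Require Import all_boot all_order all_algebra.
From mathcomp Require Import all_classical all_reals all_analysis.
From mathcomp Require Import ring lra measurable_realfun.
Import Order.TTheory GRing.Theory Num.Theory.
Local Open Scope classical_set_scope.
Local Open Scope ring_scope.



Section LA.
Variable R : realType.
Set Implicit Arguments.
Unset Strict Implicit.

Lemma enorm_ge0 N (v : 'cV[R]_N) : 0 <= enorm v.
Proof. exact: sqrtr_ge0. Qed.

Lemma enorm_sqr N (v : 'cV[R]_N) : enorm v ^+ 2 = \sum_(i < N) v i 0 ^+ 2.
Proof. by rewrite /enorm sqr_sqrtr // sumr_ge0 // => i _; rewrite sqr_ge0. Qed.

Lemma coord_le N (v : 'cV[R]_N) i : `|v i 0| <= enorm v.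
Proof.
rewrite -sqrtr_sqr /enorm ler_sqrt ?sumr_ge0 // => [|j _]; last by rewrite sqr_ge0.
rewrite (bigD1 i) //= lerDl sumr_ge0 // => j _; by rewrite sqr_ge0.
Qed.

Lemma enormZ N a (v : 'cV[R]_N) : enorm (a *: v) = `|a| * enorm v.
Proof.
rewrite /enorm -sqrtr_sqr -sqrtrM ?sqr_ge0 //; congr Num.sqrt.
rewrite mulr_sumr; apply: eq_bigr => i _; by rewrite mxE exprMn.
Qed.

Lemma enorm0 N : enorm (0 : 'cV[R]_N) = 0.
Proof. by rewrite /enorm big1 ?sqrtr0 // => i _; rewrite mxE expr0n. Qed.

Lemma enorm_le_sum N (v : 'cV[R]_N) : enorm v <= \sum_(i < N) `|v i 0|.
Proof.
rewrite /enorm -(ger0_norm (sumr_ge0 _ (fun i _ => normr_ge0 (v i 0)))).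
rewrite -sqrtr_sqr ler_sqrt ?sqr_ge0 // expr2 mulr_suml.
apply: ler_sum => i _; rewrite -[v i 0 ^+ 2]ger0_norm ?sqr_ge0 // normrX expr2 ler_wpM2l //.
rewrite (bigD1 i) //= lerDl sumr_ge0 //.
Qed.

Definition pin M K (X : 'M[R]_(M, K)) := \sum_(i < M) \sum_(j < K) `|X i j|.


Lemma pin_ge0 M K (X : 'M[R]_(M, K)) : 0 <= pin X.
Proof. by apply: sumr_ge0 => i _; apply: sumr_ge0. Qed.

Lemma qf_bound N (P : 'M[R]_N) u z : `|qf P u z| <= pin P * enorm u * enorm z.
Proof.
rewrite /qf mxE; apply: le_trans (ler_norm_sum _ _ _) _.
have -> : pin P * enorm u * enorm z =
    \sum_(j < N) (\sum_(i < N) `|P i j| * enorm u) * enorm z.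
  by rewrite /pin exchange_big /= !mulr_suml; apply: eq_bigr => j _; rewrite mulr_suml.
apply: ler_sum => j _; rewrite normrM.
apply: ler_pM => //; last exact: coord_le.
rewrite mxE; apply: le_trans (ler_norm_sum _ _ _) _.
apply: ler_sum => i _; rewrite mxE normrM mulrC ler_wpM2l //; exact: coord_le.
Qed.

Lemma mul_bound M K (X : 'M[R]_(M, K)) v : enorm (X *m v) <= pin X * enorm v.
Proof.
have := enorm_le_sum (X *m v); move/le_trans; apply.
rewrite /pin mulr_suml; apply: ler_sum => i _.
rewrite mxE mulr_suml; apply: le_trans (ler_norm_sum _ _ _) _.
apply: ler_sum => j _; rewrite normrM ler_wpM2l //; exact: coord_le.
Qed.

Lemma spec_ub M K (X : 'M[R]_(M, K)) :
  has_ubound [set enorm (X *m v) | v in [set v : 'cV[R]_K | enorm v <= 1]].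
Proof.
exists (pin X) => _ [v hv <-].
apply: le_trans (mul_bound _ _) _.
by rewrite -[leRHS]mulr1 ler_wpM2l // pin_ge0.
Qed.

Lemma spec_ge0 M K (X : 'M[R]_(M, K)) : 0 <= spec_norm X.
Proof.
apply: le_trans (enorm_ge0 (X *m 0)) _.
apply: ub_le_sup; first exact: spec_ub.
exists 0 => //=.
have -> : enorm (0 : 'cV[R]_K) = 0.
  by rewrite /enorm big1 ?sqrtr0 // => i _; rewrite mxE expr0n.
by [].
Qed.

Lemma spec_bound M K (X : 'M[R]_(M, K)) v : enorm (X *m v) <= spec_norm X * enorm v.
Proof.
have [e0|en0] := eqVneq (enorm v) 0.
  have -> : v = 0.
    apply/matrixP => i j; rewrite (ord1 j) mxE; apply/normr0_eq0.
    by apply/eqP; rewrite eq_le normr_ge0 andbT -e0 coord_le.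
  by rewrite mulmx0 !enorm0 mulr0.
have ep : 0 < enorm v by rewrite lt_neqAle eq_sym en0 enorm_ge0.
have h : enorm (X *m ((enorm v)^-1 *: v)) <= spec_norm X.
  apply: ub_le_sup; first exact: spec_ub.
  exists ((enorm v)^-1 *: v) => //=.
  by rewrite enormZ ger0_norm ?invr_ge0 ?enorm_ge0 // mulVf.
move: h; rewrite -scalemxAr enormZ ger0_norm ?invr_ge0 ?enorm_ge0 //.
by rewrite -ler_pdivrMr // mulrC.
Qed.

Lemma pow_bound N (X : 'M[R]_N) j v :
  enorm (X ^+ j *m v) <= spec_norm X ^+ j * enorm v.
Proof.
elim: j => [|j IH]; first by rewrite expr0 mul1mx expr0 mul1r.
rewrite exprS -mulmxE -mulmxA exprS -mulrA.
apply: le_trans (spec_bound _ _) _.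
by rewrite ler_wpM2l // spec_ge0.
Qed.

End LA.



Section SM.
Variable R : realType.
Set Implicit Arguments.
Unset Strict Implicit.

Lemma CS (Nn : nat) (c b : nat -> R) : (forall k, 0 <= c k) ->
  (\sum_(k < Nn) c k * b k) ^+ 2 <= (\sum_(k < Nn) c k) * (\sum_(k < Nn) c k * b k ^+ 2).
Proof.
move=> c0.
set C := \sum_(k < Nn) c k; set B := \sum_(k < Nn) c k * b k.
set S := \sum_(k < Nn) c k * b k ^+ 2.
have C0 : 0 <= C by apply: sumr_ge0.
have [Ce|Cn] := eqVneq C 0.
  have ck k : (k < Nn)%N -> c k = 0.
    move=> hk; apply/eqP; rewrite eq_le c0 andbT -Ce /C.
    rewrite (bigD1 (Ordinal hk)) //= lerDl sumr_ge0 //.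
  have -> : B = 0 by rewrite /B big1 // => k _; rewrite ck // mul0r.
  by rewrite Ce expr0n /= mul0r.
have Cp : 0 < C by rewrite lt_neqAle eq_sym Cn.
set m := B / C.
have h : 0 <= \sum_(k < Nn) c k * (b k - m) ^+ 2.
  by apply: sumr_ge0 => k _; rewrite mulr_ge0 // sqr_ge0.
have e : \sum_(k < Nn) c k * (b k - m) ^+ 2 = S - 2 * m * B + m ^+ 2 * C.
  rewrite /S /B /C !mulr_sumr -sumrB -big_split /=; apply: eq_bigr => k _; ring.
rewrite e /m in h.
have e2 : S - 2 * (B / C) * B + (B / C) ^+ 2 * C = S - B ^+ 2 / C.
  by field; rewrite Cn.
rewrite e2 subr_ge0 ler_pdivrMr // in h.
by rewrite mulrC.
Qed.

Lemma GA (rho : R) k Nn : 0 <= rho < 1 ->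
  (1 - rho) * \sum_(t < Nn) (if (t < k)%N then rho ^+ (k - t) else 0) <= rho ^+ (k - Nn).+1.
Proof.
case/andP=> r0 r1.
elim: Nn => [|Nn IH]; first by rewrite big_ord0 mulr0 exprn_ge0.
rewrite big_ord_recr /= mulrDr.
case: ltnP => hk.
  have e : (k - Nn = (k - Nn.+1).+1)%N by rewrite subnSK.
  rewrite e in IH *.
  have := exprn_ge0 (k - Nn.+1) r0.
  rewrite !exprS in IH *; nra.
rewrite mulr0 addr0; apply: (le_trans IH).
have -> : (k - Nn = 0)%N by apply/eqP; rewrite subn_eq0.
have -> : (k - Nn.+1 = 0)%N by apply/eqP; rewrite subn_eq0 (leq_trans hk).
by [].
Qed.

Lemma GB (rho : R) t Nn : 0 <= rho < 1 ->
  (1 - rho) * \sum_(k < Nn) (if (t < k)%N then rho ^+ (k - t) else 0) <= 1 - rho ^+ (Nn - t).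
Proof.
case/andP=> r0 r1.
elim: Nn => [|Nn IH]; first by rewrite big_ord0 mulr0 sub0n expr0 subrr.
rewrite big_ord_recr /= mulrDr.
case: ltnP => hk.
  rewrite subSn ?(ltnW hk) // exprS; nra.
rewrite mulr0 addr0; apply: (le_trans IH).
have -> : (Nn - t = 0)%N by apply/eqP; rewrite subn_eq0.
rewrite expr0 subrr subr_ge0 exprn_ile1 //; exact: ltW.
Qed.

Lemma GA' (rho : R) k Nn : 0 <= rho < 1 ->
  \sum_(t < Nn) (if (t < k)%N then rho ^+ (k - t) else 0) <= (1 - rho)^-1.
Proof.
move=> /[dup] hr /andP[r0 r1]; have p : 0 < 1 - rho by rewrite subr_gt0.
rewrite -[X in _ <= X]mulr1 ler_pdivlMl // (le_trans (GA k Nn hr)) // exprn_ile1 //; exact: ltW.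
Qed.

Lemma GB' (rho : R) t Nn : 0 <= rho < 1 ->
  \sum_(k < Nn) (if (t < k)%N then rho ^+ (k - t) else 0) <= (1 - rho)^-1.
Proof.
move=> /[dup] hr /andP[r0 r1]; have p : 0 < 1 - rho by rewrite subr_gt0.
rewrite -[X in _ <= X]mulr1 ler_pdivlMl // (le_trans (GB t Nn hr)) // gerBl exprn_ge0 //.
Qed.

Lemma DS (g rho : R) (a : nat -> R) Nn : 0 < g < 1 -> 0 <= rho < 1 -> (forall k, 0 <= a k) ->
  \sum_(k < Nn) \sum_(t < Nn) (if (t < k)%N then g ^+ k * rho ^+ (k - t) * (a k * a t) else 0)
  <= (1 - rho)^-1 * \sum_(k < Nn) g ^+ k * a k ^+ 2.
Proof.
move=> /andP[g0 g1] hr a0; have /andP[r0 r1] := hr.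
have step : forall k t : 'I_Nn,
   (if (t < k)%N then g ^+ k * rho ^+ (k - t) * (a k * a t) else 0) <=
   ((if (t < k)%N then rho ^+ (k - t) else 0) * (g ^+ k * a k ^+ 2)
   + (if (t < k)%N then rho ^+ (k - t) else 0) * (g ^+ t * a t ^+ 2)) / 2.
  move=> k t; case: ltnP => h; last by rewrite !mul0r addr0 mul0r.
  have gk : g ^+ k <= g ^+ t by rewrite ler_wiXn2l // ?ltW // ltnW.
  have p1 : 0 <= rho ^+ (k - t) * g ^+ k * (a k - a t) ^+ 2.
    by rewrite mulr_ge0 ?sqr_ge0 // mulr_ge0 ?exprn_ge0 // ltW.
  have p2 : 0 <= rho ^+ (k - t) * (g ^+ t - g ^+ k) * a t ^+ 2.
    by rewrite mulr_ge0 ?sqr_ge0 // mulr_ge0 ?exprn_ge0 ?subr_ge0.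
  set A := rho ^+ (k - t) in p1 p2 *; set G := g ^+ k in gk p1 p2 *.
  set H := g ^+ t in gk p2 *.
  rewrite ler_pdivlMr //; nra.
apply: (le_trans (ler_sum _ (fun k _ => ler_sum _ (fun t _ => step k t)))).
under eq_bigr do rewrite -mulr_suml big_split /=.
rewrite -mulr_suml big_split /=.
apply: (@le_trans _ _ ((((1 - rho)^-1 * \sum_(k < Nn) g ^+ k * a k ^+ 2) +
   ((1 - rho)^-1 * \sum_(k < Nn) g ^+ k * a k ^+ 2)) / 2)); last first.
  lra.
rewrite ler_pM2r // lerD //.
  rewrite mulr_sumr; apply: ler_sum => k _; rewrite -mulr_suml ler_wpM2r //.
    by rewrite mulr_ge0 ?exprn_ge0 // ?sqr_ge0 // ltW.
  exact: GA'.
rewrite exchange_big /= mulr_sumr; apply: ler_sum => t _; rewrite -mulr_suml ler_wpM2r //.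
  by rewrite mulr_ge0 ?exprn_ge0 // ?sqr_ge0 // ltW.
exact: GB'.
Qed.

End SM.



Section PW.
Variable R : realType.
Set Implicit Arguments.
Unset Strict Implicit.
Variables (N : nat) (P M : 'M[R]_N) (x : 'cV[R]_N) (w : nat -> 'cV[R]_N) (g : R).
Hypothesis hg : 0 < g < 1.
Hypothesis hM : spec_norm M < 1.
Let a k := enorm (w k).
Let rho := spec_norm M.

Lemma qf_sum I (r : seq I) (F : I -> 'cV[R]_N) u :
  qf P u (\sum_(i <- r) F i) = \sum_(i <- r) qf P u (F i).
Proof. by rewrite /qf mulmx_sumr summxE. Qed.

Lemma gS k : g ^+ k.+1 <= g ^+ k.
Proof. case/andP: hg => g0 g1; by rewrite exprS ler_piMl ?exprn_ge0 ?ltW. Qed.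

Lemma B1 Nn : `|\sum_(0 <= k < Nn) g ^+ k.+1 * qf P (w k) (M ^+ k.+1 *m x)|
   <= pin P * enorm x * \sum_(k < Nn) g ^+ k * (1 + a k ^+ 2).
Proof.
case/andP: hg => g0 g1.
have r0 : 0 <= rho := spec_ge0 M.
rewrite big_mkord; apply: (le_trans (ler_norm_sum _ _ _)).
rewrite mulr_sumr; apply: ler_sum => k _.
have gk0 : 0 <= g ^+ k.+1 by rewrite exprn_ge0 // ltW.
rewrite normrM (ger0_norm gk0).
have h1 := qf_bound P (w k) (M ^+ k.+1 *m x).
have h2 := pow_bound M k.+1 x.
have h3 : rho ^+ k.+1 <= 1 by rewrite exprn_ile1 // ltW.
have h4 := gS k.
have a0 : 0 <= a k := enorm_ge0 _.
have x0 := enorm_ge0 x.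
have p0 := pin_ge0 P.
fold rho in h2; fold (a k) in h1.
set q := qf _ _ _ in h1 *; set e := enorm (M ^+ k.+1 *m x) in h1 h2.
set G := g ^+ k.+1 in h4 gk0 *; set H := g ^+ k in h4 *.
set r := rho ^+ k.+1 in h2 h3.
set A := a k in h1 a0 *.
have e1 : e <= enorm x by apply: (le_trans h2); rewrite ler_piMl.
have e2 : `|q| <= pin P * A * enorm x.
  apply: (le_trans h1); rewrite ler_wpM2l // mulr_ge0 //.
have e3 : A <= 1 + A ^+ 2 by nra.
apply: (@le_trans _ _ (H * (pin P * A * enorm x))).
  apply: ler_pM => //; exact: normr_ge0.
have HH : 0 <= H by rewrite /H exprn_ge0 // ltW.
have : pin P * A * enorm x <= pin P * enorm x * (1 + A ^+ 2).
  by rewrite mulrAC ler_wpM2l // mulr_ge0.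
nra.
Qed.

Lemma B2 Nn : `|\sum_(0 <= k < Nn) g ^+ k.+1 * qf P (w k) (w k)|
   <= pin P * \sum_(k < Nn) g ^+ k * a k ^+ 2.
Proof.
case/andP: hg => g0 g1.
rewrite big_mkord; apply: (le_trans (ler_norm_sum _ _ _)).
rewrite mulr_sumr; apply: ler_sum => k _.
have gk0 : 0 <= g ^+ k.+1 by rewrite exprn_ge0 // ltW.
rewrite normrM (ger0_norm gk0).
have h1 := qf_bound P (w k) (w k).
have h4 := gS k.
have p0 := pin_ge0 P.
have a0 : 0 <= a k := enorm_ge0 _.
fold (a k) in h1.
set q := qf _ _ _ in h1 *.
set G := g ^+ k.+1 in h4 gk0 *; set H := g ^+ k in h4 *.
set A := a k in h1 a0 *.
have HH : 0 <= H by rewrite /H exprn_ge0 // ltW.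
have : 0 <= pin P * A * A by rewrite !mulr_ge0.
have := normr_ge0 q.
nra.
Qed.

Lemma sum1_le (F : nat -> R) Nn : (forall k, 0 <= F k) ->
  \sum_(1 <= k < Nn) F k <= \sum_(k < Nn) F k.
Proof.
move=> F0; rewrite -(big_mkord xpredT F); case: Nn => [|Nn]; first by rewrite !big_geq.
by rewrite big_ltn // lerDr.
Qed.

Lemma widen_sum (F : nat -> R) k Nn : (k < Nn)%N ->
  \sum_(0 <= t < k) F t = \sum_(t < Nn) (if (t < k)%N then F t else 0).
Proof.
move=> hk; rewrite (big_nat_widen _ _ Nn); last exact: ltnW.
by rewrite big_mkord big_mkcond.
Qed.

Lemma B3 Nn : `|\sum_(1 <= k < Nn) g ^+ k.+1 *
      qf P (w k) (\sum_(0 <= t < k) M ^+ (k - t) *m w t)|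
   <= pin P * ((1 - rho)^-1 * \sum_(k < Nn) g ^+ k * a k ^+ 2).
Proof.
case/andP: hg => g0 g1.
have r0 : 0 <= rho := spec_ge0 M.
have p0 := pin_ge0 P.
apply: (le_trans (ler_norm_sum _ _ _)).
apply: (le_trans (@sum1_le _ _ (fun k => normr_ge0 _))).
apply: (@le_trans _ _ (pin P * \sum_(k < Nn) \sum_(t < Nn)
   (if (t < k)%N then g ^+ k * rho ^+ (k - t) * (a k * a t) else 0))); last first.
  rewrite ler_wpM2l //; apply: DS => //; try exact/andP.
  by move=> k; exact: enorm_ge0.
rewrite mulr_sumr; apply: ler_sum => k _.
have gk0 : 0 <= g ^+ k.+1 by rewrite exprn_ge0 // ltW.
rewrite normrM (ger0_norm gk0) qf_sum (@widen_sum _ k Nn) //.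
apply: (le_trans (ler_wpM2l gk0 (ler_norm_sum _ _ _))); rewrite !mulr_sumr.
apply: ler_sum => t _.
case: ltnP => htk; last by rewrite normr0 mulr0 mulr0.
have h1 := qf_bound P (w k) (M ^+ (k - t) *m w t).
have h2 := pow_bound M (k - t) (w t).
have h4 := gS k.
have a0 : 0 <= a k := enorm_ge0 _.
have at0 : 0 <= a t := enorm_ge0 _.
fold rho in h2; fold (a k) in h1; fold (a t) in h2.
set q := qf _ _ _ in h1 *; set e := enorm (M ^+ (k - t) *m w t) in h1 h2.
set G := g ^+ k.+1 in h4 gk0 *; set H := g ^+ k in h4 *.
set r := rho ^+ (k - t) in h2 *.
set A := a k in h1 a0 *; set B := a t in h2 at0 *.
have r0' : 0 <= r by rewrite /r exprn_ge0.
have HH : 0 <= H by rewrite /H exprn_ge0 // ltW.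
have e2 : `|q| <= pin P * A * (r * B).
  apply: (le_trans h1); rewrite ler_wpM2l // mulr_ge0 //.
apply: (@le_trans _ _ (H * (pin P * A * (r * B)))).
  apply: ler_pM => //; exact: normr_ge0.
have : 0 <= pin P * A * (r * B) by rewrite !mulr_ge0.
move=> _; rewrite le_eqVlt; apply/orP; left; apply/eqP; ring.
Qed.

Lemma rseries_bound m (u : nat -> R) (B : R) :
  0 <= B -> (forall N, `|\sum_(m <= k < N) u k| <= B) -> `|rseries m u| <= B.
Proof.
move=> B0 hB; rewrite /rseries.
set f := (fun N => _).
have [cv|ncv] := pselect (cvgn f).
  rewrite ler_norml; apply/andP; split.
    apply: limr_ge => //; near=> K; have := hB K; rewrite ler_norml => /andP[] //.
  apply: limr_le => //; near=> K; have := hB K; rewrite ler_norml => /andP[] //.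
rewrite /lim dvg_inP //. by rewrite normr0.
Unshelve. all: by end_near. Qed.

Lemma Gsum Nn : \sum_(k < Nn) g ^+ k <= (1 - g)^-1.
Proof.
case/andP: hg => g0 g1; have p : 0 < 1 - g by rewrite subr_gt0.
have h : (1 - g) * \sum_(k < Nn) g ^+ k <= 1 - g ^+ Nn.
  elim: Nn => [|n IH]; first by rewrite big_ord0 mulr0 expr0 subrr.
  rewrite big_ord_recr /= mulrDr exprS; lra.
rewrite -[X in _ <= X]mulr1 ler_pdivlMl //; apply: (le_trans h).
by rewrite gerBl exprn_ge0 // ltW.
Qed.

Lemma Xbound (t : R) : 0 <= t -> (forall Nn, \sum_(k < Nn) g ^+ k * a k ^+ 4 <= t) ->
  `|qf P x x + 2 * rseries 0 (fun k => g ^+ k.+1 * qf P (w k) (M ^+ k.+1 *m x))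
    + rseries 0 (fun k => g ^+ k.+1 * qf P (w k) (w k))
    + 2 * rseries 1 (fun k => g ^+ k.+1 *
          qf P (w k) (\sum_(0 <= tau < k) M ^+ (k - tau) *m w tau))|
  <= `|qf P x x| + 2 * (pin P * enorm x * ((1 - g)^-1 + Num.sqrt (t / (1 - g))))
     + pin P * Num.sqrt (t / (1 - g))
     + 2 * (pin P * ((1 - rho)^-1 * Num.sqrt (t / (1 - g)))).
Proof.
move=> t0 ht.
case/andP: hg => g0 g1; have p : 0 < 1 - g by rewrite subr_gt0.
have r0 : 0 <= rho := spec_ge0 M.
have pr : 0 < 1 - rho by rewrite subr_gt0.
have p0 := pin_ge0 P.
have x0 := enorm_ge0 x.
set s := Num.sqrt (t / (1 - g)).
have s0 : 0 <= s := sqrtr_ge0 _.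
have Us Nn : \sum_(k < Nn) g ^+ k * a k ^+ 2 <= s.
  have U0 : 0 <= \sum_(k < Nn) g ^+ k * a k ^+ 2.
    by apply: sumr_ge0 => k _; rewrite mulr_ge0 ?sqr_ge0 // exprn_ge0 // ltW.
  rewrite -(ger0_norm U0) -sqrtr_sqr ler_sqrt; last first.
    by rewrite divr_ge0 // ltW.
  have h := @CS R Nn (fun k => g ^+ k) (fun k => a k ^+ 2) (fun k => exprn_ge0 k (ltW g0)).
  apply: (le_trans h).
  have G0 : 0 <= \sum_(k < Nn) g ^+ k by apply: sumr_ge0 => k _; rewrite exprn_ge0 // ltW.
  have V0 : 0 <= \sum_(k < Nn) g ^+ k * (a k ^+ 2) ^+ 2.
    by apply: sumr_ge0 => k _; rewrite mulr_ge0 ?sqr_ge0 // exprn_ge0 // ltW.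
  have hV : \sum_(k < Nn) g ^+ k * (a k ^+ 2) ^+ 2 <= t.
    rewrite (eq_bigr (fun k : 'I_Nn => g ^+ k * a k ^+ 4)) ?ht // => k _; by rewrite -exprM.
  rewrite mulrC; apply: ler_pM => //; exact: Gsum.
have ir : 0 <= (1 - rho)^-1 by rewrite invr_ge0 ltW.
have ig : 0 <= (1 - g)^-1 by rewrite invr_ge0 ltW.
apply: le_trans; first exact: ler_normD.
apply: lerD; last first.
  rewrite normrM ger0_norm // ler_wpM2l //; apply: rseries_bound.
    by rewrite !mulr_ge0.
  move=> Nn; apply: (le_trans (B3 Nn)); rewrite ler_wpM2l // ler_wpM2l //.
apply: le_trans; first exact: ler_normD.
apply: lerD; last first.
  apply: rseries_bound; first by rewrite mulr_ge0.
  move=> Nn; apply: (le_trans (B2 Nn)); rewrite ler_wpM2l //.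
apply: le_trans; first exact: ler_normD.
apply: lerD => //.
rewrite normrM ger0_norm // ler_wpM2l //; apply: rseries_bound.
  by rewrite !mulr_ge0 // addr_ge0.
move=> Nn; apply: (le_trans (B1 Nn)); rewrite ler_wpM2l ?mulr_ge0 //.
under eq_bigr do rewrite mulrDr mulr1.
rewrite big_split /=; apply: lerD; [exact: Gsum|exact: Us].
Qed.

End PW.



Lemma le_int_nm (R : realType) d (T : measurableType d) (mu : {measure set T -> \bar R})
  (f h : T -> \bar R) : (forall x, (0 <= f x)%E) -> (forall x, (f x <= h x)%E) ->
  (\int[mu]_(x in setT) f x <= \int[mu]_(x in setT) h x)%E.
Proof.
move=> f0 fh.
have h0 : forall x, (0 <= h x)%E by move=> x; exact: (le_trans (f0 x)).
rewrite !ge0_integralTE //.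
apply: ereal_sup_le => _ [s hs <-]; exists s => //= x.
exact: (le_trans (hs x)).
Qed.

Lemma meas_a4 (R : realType) d (T : measurableType d) N (w : T -> 'cV[R]_N) :
  (forall i, measurable_fun setT (fun om => w om i 0)) ->
  measurable_fun setT (fun om => enorm (w om) ^+ 4).
Proof.
move=> mw.
have -> : (fun om => enorm (w om) ^+ 4) = (fun om => (\sum_(i < N) w om i 0 ^+ 2) ^+ 2).
  by apply/funext => om; rewrite -enorm_sqr -exprM.
apply: measurable_funX; apply: measurable_sum => i; exact: measurable_funX.
Qed.



Theorem corollary2 (R : realType) (d : measure_display) (T : measurableType d)
  (P : probability T R) (n m p : nat)
  (A : 'M[R]_n) (B : 'M[R]_(n, m)) (C : 'M[R]_(p, n))
  (Q : 'M[R]_n) (Rc : 'M[R]_m) (K : 'M[R]_(m, n)) (L : 'M[R]_(n, p))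
  (gamma sigma4 : R) (Pb : 'M[R]_(n + n))
  (v : nat -> T -> 'cV[R]_n) (s : nat -> T -> 'cV[R]_p)
  (xbar : 'cV[R]_(n + n)) :
  posdef Q -> posdef Rc -> 0 < gamma < 1 ->
  Pb = Qbar Q Rc K + gamma *: ((Abar A B C K L)^T *m Pb *m Abar A B C K L) ->
  let w := fun k om => Mbar L *m col_mx (v k om) (s k om) in
  (forall k i, measurable_fun setT (fun om => w k om i 0)) ->
  mutually_independent P w ->
  identically_distributed P w ->
  (forall k i, ('E_P[fun om => (w k om i 0)%R] = 0)%E) ->
  (forall k, ('E_P[fun om => (enorm (w k om) ^+ 4)%R] <= sigma4%:E)%E) ->
  spec_norm (Abar A B C K L) < 1 ->
  exists c : R,
    ('V_P[GKL (Abar A B C K L) Pb gamma w xbar] <= c%:E)%E.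
Proof.
move=> _ _ hg _ w mw _ _ _ mom4 hM.
set Ab := Abar A B C K L in hM *.
set X := GKL Ab Pb gamma w xbar.
have /andP[g0 g1] := hg.
have pg : 0 < 1 - gamma by rewrite subr_gt0.
have ig : 0 <= (1 - gamma)^-1 by rewrite invr_ge0 ltW.
have ma k : measurable_fun setT (fun om => enorm (w k om) ^+ 4).
  by apply: meas_a4 => i; exact: mw.
have sig0 : 0 <= sigma4.
  rewrite -lee_fin; apply: le_trans (mom4 0%N); rewrite expectation.unlock.
  by apply: integral_ge0 => om _; rewrite lee_fin exprn_ge0 // enorm_ge0.
rewrite /variance covariance.unlock.
set c := fine _.
rewrite expectation.unlock.
pose a k om := enorm (w k om).
pose Tser om := (\sum_(k <oo) ((gamma ^+ k * a k om ^+ 4)%:E))%E.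
pose pi := pin Pb; pose xi := enorm xbar; pose rho := spec_norm Ab.
pose al := `|qf Pb xbar xbar| + 2 * (pi * xi * (1 - gamma)^-1).
pose be := 2 * (pi * xi) + pi + 2 * (pi * (1 - rho)^-1).
pose K0 := 2 * (`|c| + al) ^+ 2.
pose K1 := 2 * be ^+ 2 / (1 - gamma) + 1.
have K1p : 0 < K1.
  have := sqr_ge0 be; have := ig; move=> h1 h2; have : 0 <= 2 * be ^+ 2 / (1 - gamma) by rewrite mulr_ge0 // mulr_ge0.
  rewrite /K1; lra.
have K0p : 0 <= K0 by rewrite /K0 mulr_ge0 // sqr_ge0.
exists (K0 + K1 * (sigma4 / (1 - gamma))).
have T0 om : (0 <= Tser om)%E.
  rewrite /Tser; apply: (@nneseries_ge0 R _ xpredT 0%N) => k _ _. have q : (0 <= gamma ^+ k * a k om ^+ 4) by apply: mulr_ge0; apply: exprn_ge0; [exact: ltW|exact: enorm_ge0].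
  by rewrite lee_fin.
have pw om : ((((X \- cst c) * (X \- cst c)) om)%:E <= K0%:E + K1%:E * Tser om)%E.
  have := T0 om.
  case E: (Tser om) => [t| |] T0'; last by [].
  - have t0 : 0 <= t by rewrite -lee_fin.
    have ht Nn : \sum_(k < Nn) gamma ^+ k * enorm (w k om) ^+ 4 <= t.
      rewrite -lee_fin -E /Tser -sumEFin.
      have h := @nneseries_lim_ge R (fun k => (gamma ^+ k * enorm (w k om) ^+ 4)%:E) xpredT 0%N Nn.
      rewrite big_mkord in h; apply: h => k _ _.
      rewrite lee_fin; apply: mulr_ge0; apply: exprn_ge0; [exact: ltW|exact: enorm_ge0].
    have hX := @Xbound R (n + n) Pb Ab xbar (fun k => w k om) gamma hg hM t t0 ht.
    rewrite -EFinM -EFinD lee_fin /=.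
    have -> : ((X \- cst c) * (X \- cst c)) om = (X om - c) * (X om - c) by [].
    have -> : X om = qf Pb xbar xbar
      + 2 * rseries 0 (fun k => gamma ^+ k.+1 * qf Pb (w k om) (Ab ^+ k.+1 *m xbar))
      + rseries 0 (fun k => gamma ^+ k.+1 * qf Pb (w k om) (w k om))
      + 2 * rseries 1 (fun k => gamma ^+ k.+1 *
          qf Pb (w k om) (\sum_(0 <= tau < k) Ab ^+ (k - tau) *m w tau om)) by [].
    move: hX.
    set xo := (qf Pb xbar xbar + _ + _ + _).
    set sq := Num.sqrt (t / (1 - gamma)).
    have sq0 : 0 <= sq := sqrtr_ge0 _.
    have sq2 : sq ^+ 2 = t / (1 - gamma) by rewrite sqr_sqrtr // divr_ge0 // ltW.
    have r0 : 0 <= rho := spec_ge0 Ab.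
    have ir : 0 <= (1 - rho)^-1 by rewrite invr_ge0 subr_ge0 ltW.
    have p0 : 0 <= pi := pin_ge0 Pb.
    have x0 : 0 <= xi := enorm_ge0 xbar.
    move=> hX.
    have hX' : `|xo| <= al + be * sq.
      apply: (le_trans hX); rewrite /al /be /pi /xi /rho; rewrite le_eqVlt; apply/orP; left; apply/eqP; ring.
    have hd : `|xo - c| <= (`|c| + al) + be * sq.
      apply: (le_trans (ler_normB _ _)); lra.
    have be0 : 0 <= be by rewrite /be !addr_ge0 ?mulr_ge0.
    have al0 : 0 <= al by rewrite /al addr_ge0 ?mulr_ge0.
    have u0 : 0 <= `|c| + al by rewrite addr_ge0.
    have h1 : (xo - c) * (xo - c) <= ((`|c| + al) + be * sq) ^+ 2.
      rewrite -expr2 -real_normK ?num_real //.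
      by rewrite lerXn2r // ?nnegrE ?normr_ge0 // addr_ge0 // mulr_ge0.
    apply: (le_trans h1).
    have h2 : 2 * be ^+ 2 * sq ^+ 2 <= K1 * t.
      pose z := 2 * be ^+ 2 / (1 - gamma).
      have K1z : K1 = z + 1 by [].
      have e : 2 * be ^+ 2 * sq ^+ 2 = z * t.
        by rewrite sq2 /z mulrA mulrAC.
      by rewrite e K1z mulrDl mul1r lerDl.
    rewrite /K0.
    set u := `|c| + al in u0 *.
    set y := be * sq.
    have : (u - y) ^+ 2 >= 0 by rewrite sqr_ge0.
    have e2 : 2 * be ^+ 2 * sq ^+ 2 = 2 * y ^+ 2 by rewrite /y; ring.
    rewrite e2 in h2.
    nra.
  - rewrite gt0_muley; last by rewrite lte_fin.
    by rewrite addey // leey.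
apply: (le_trans (@le_int_nm R d T P _ _ _ pw)).
  by move=> om; rewrite lee_fin /= -expr2 sqr_ge0.
have f0 k om : (0 <= (gamma ^+ k * a k om ^+ 4)%:E)%E.
  rewrite lee_fin; apply: mulr_ge0; apply: exprn_ge0; [exact: ltW|exact: enorm_ge0].
have mf k : measurable_fun setT (fun om => (gamma ^+ k * a k om ^+ 4)%:E).
  apply/measurable_EFinP; apply: measurable_funM => //; exact: ma.
have mT : measurable_fun setT Tser.
  have := @ge0_emeasurable_sum d T R setT (fun k om => (gamma ^+ k * a k om ^+ 4)%:E) predT.
  by apply => // k x _ _; exact: f0.
rewrite ge0_integralD //; try (by move=> om _; rewrite lee_fin);
  try (by move=> om _; rewrite mule_ge0 // lee_fin ltW); try exact: measurable_funeM.
have -> : (\int[P]_(x in setT) (K0%:E) = K0%:E)%E.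
  rewrite (@integral_cst d T R P setT measurableT K0%:E) -[RHS]mule1; congr (_ * _)%E; exact: probability_setT.
rewrite ge0_integralZl //; try (by move=> om _; exact: T0); try (by rewrite lee_fin ltW).
rewrite (EFinD K0); apply: leeD2l; rewrite (EFinM K1); apply: lee_wpmul2l; first by rewrite lee_fin ltW.
rewrite /Tser integral_nneseries //; try (by move=> k om _; exact: f0).
apply: (@le_trans _ _ (\sum_(k <oo) (gamma ^+ k * sigma4)%:E)%E).
  apply: lee_nneseries.
    move=> k _ _; apply: integral_ge0 => om _; exact: f0.
  move=> k _.
  under eq_integral do rewrite EFinM.
  rewrite ge0_integralZl_EFin //; try (by move=> om _; rewrite lee_fin exprn_ge0 // enorm_ge0);
    try (by rewrite exprn_ge0 // ltW); try (by apply/measurable_EFinP; exact: ma).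
  rewrite EFinM; apply: lee_wpmul2l; first by rewrite lee_fin exprn_ge0 // ltW.
  by have := mom4 k; rewrite expectation.unlock.
apply: lime_le.
  by apply: is_cvg_nneseries => k _ _; rewrite lee_fin mulr_ge0 // exprn_ge0 // ltW.
apply: nearW => Nn; rewrite sumEFin lee_fin big_mkord -mulr_suml mulrC [_ / _]mulrC.
by rewrite [X in _ <= X]mulrC ler_wpM2l //; apply: Gsum.
Qed.
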